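(* Let $G$ be the reflexive transitive closure of a branching on vertex set $[n]$, with adjacency matrix $M\in\{0,1\}^{n\times n}$ ($M_{j,i}=1$ iff $(i,j)$ is an edge of $G$), accessible only through a matrix-vector oracle $q\mapsto Mq$ over $GF(2)$. Consider the following procedure: initialize $lvl[v]=0$ for all $v\in[n]$ and $q=\mathbf{1}$ (all-ones vector); for $i=0,1,\ldots,\lceil\log_2 n\rceil-1$: query $r:=(Mq)\oplus q$, for every $v$ with $r_v=1$ set $lvl[v]\gets lvl[v]+2^i$, and then set $q\gets q\odot r$ (coordinatewise product). Then this procedure uses $O(\log n)$ queries and at termination $lvl[v]$ equals the level of $v$ for every vertex $v\in[n]$.
   Context: A branching is a forest of rooted trees with all edges directed away from the roots. Its reflexive transitive closure adds an edge $(u,w)$ whenever $w$ is reachable from $u$ (including a loop $(u,u)$ at every vertex). The level of a vertex is its depth in the underlying branching: roots are on level $0$, and children of a vertex on level $\ell$ are on level $\ell+1$. All arithmetic is over $GF(2)$; $\oplus$ is xor and $\odot$ is coordinatewise multiplication (and). *)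

(* Defs.v *)
From mathcomp Require Import all_boot all_algebra.
Set Implicit Arguments. Unset Strict Implicit. Unset Printing Implicit Defensive.
Import GRing.Theory.
Local Open Scope ring_scope.

(* A branching on vertex set 'I_n is given by its parent map: par v = Some p
   iff (p, v) is an edge (p is the parent of v); par v = None iff v is a root.
   iterp par k v = k-th ancestor of v (None if it does not exist). *)
Definition iterp n (par : 'I_n -> option 'I_n) (k : nat) (v : 'I_n) : option 'I_n :=
  iter k (obind par) (Some v).

(* Acyclicity: every vertex reaches a root by following parents, so the
   parent map describes a forest of rooted trees with edges directed away from
   the roots. *)
Definition is_branching n (par : 'I_n -> option 'I_n) : Prop :=
  forall v, exists k, iterp par k v = None.

Definition reach n (par : 'I_n -> option 'I_n) (u w : 'I_n) : Prop :=
  exists k, iterp par k w = Some u.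

Definition is_level n (par : 'I_n -> option 'I_n) (v : 'I_n) (l : nat) : Prop :=
  exists r, iterp par l v = Some r /\ par r = None.

(* State of the procedure: (lvl, q, number of oracle queries so far). *)
Definition state n := ({ffun 'I_n -> nat} * 'cV['F_2]_n * nat)%type.

Definition init_state n : state n := ([ffun => 0%N], const_mx 1, 0%N).

Definition step n (O : 'cV['F_2]_n -> 'cV['F_2]_n) (i : nat) (st : state n)
  : state n :=
  let: (lvl, q, cnt) := st in
  let r := O q + q in
  ([ffun v => if r v 0 == 1 then (lvl v + 2 ^ i)%N else lvl v],
   \col_v (q v 0 * r v 0),
   cnt.+1).

Fixpoint run n (O : 'cV['F_2]_n -> 'cV['F_2]_n) (k : nat) : state n :=
  match k with
  | 0 => init_state n
  | k'.+1 => step O k' (run O k')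
  end.

(* Main.v *)
Require Import Defs.
From mathcomp Require Import all_boot all_algebra zify.
Import GRing.Theory.
Set Implicit Arguments. Unset Strict Implicit.


Lemma F2_cases (x : 'F_2) : x = 0%R \/ x = 1%R.
Proof. case: x => [[|[|m]] Hm]. by left; exact/val_inj. by right; exact/val_inj. done. Qed.

Lemma iter_obind_None n (par : 'I_n -> option 'I_n) a : iter a (obind par) None = None.
Proof. by elim: a => //= a ->. Qed.

Lemma iterpD n (par : 'I_n -> option 'I_n) a b v :
  iterp par (a + b) v = obind (iterp par a) (iterp par b v).
Proof.
rewrite /iterp iterD; case: (iter b (obind par) (Some v)) => //= ; exact: iter_obind_None.
Qed.

Lemma iterp_none n (par : 'I_n -> option 'I_n) a b v :
  iterp par a v = None -> a <= b -> iterp par b v = None.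
Proof.
move=> Ha Hab; by rewrite -(subnK Hab) iterpD Ha.
Qed.

Lemma level_uniq n (par : 'I_n -> option 'I_n) v l l' :
  is_level par v l -> is_level par v l' -> l = l'.
Proof.
have key : forall l l', is_level par v l -> is_level par v l' -> l < l' -> False.
  move=> a b [r [Hr Pr]] [r' [Hr' _]] Hab.
  have : iterp par a.+1 v = None by rewrite -add1n iterpD /= Hr /= /iterp /= Pr.
  by move/(iterp_none)/(_ Hab); rewrite Hr'.
move=> H1 H2; case: (ltngtP l l') => // Hl; exfalso.
  exact: (key _ _ H1 H2 Hl).
exact: (key _ _ H2 H1 Hl).
Qed.

Lemma hbb n (par : 'I_n -> option 'I_n) (hb : is_branching par) v :
  exists k, iterp par k v == None.
Proof. by case: (hb v) => k hk; exists k; apply/eqP. Qed.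

Definition dep n (par : 'I_n -> option 'I_n) (hb : is_branching par) v :=
  (ex_minn (hbb hb v)).-1.

Lemma dep_level n (par : 'I_n -> option 'I_n) (hb : is_branching par) v :
  is_level par v (dep hb v).
Proof.
rewrite /dep; case: ex_minnP => k /eqP Hk Hmin.
case: k Hk Hmin => [//|k] Hk Hmin /=.
case E: (iterp par k v) => [r|].
  exists r; split => //; by move: Hk; rewrite -add1n iterpD E.
by have := Hmin k (introT eqP E); rewrite ltnn.
Qed.

Lemma dep_eq n (par : 'I_n -> option 'I_n) (hb : is_branching par) v l :
  is_level par v l -> dep hb v = l.
Proof. move=> H; exact: level_uniq (dep_level hb v) H. Qed.

Lemma iterp_some n (par : 'I_n -> option 'I_n) (hb : is_branching par) v k :
  (iterp par k v != None) = (k <= dep hb v).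
Proof.
have [r [Hr Pr]] := dep_level hb v.
case: leqP => Hk.
  apply/negP => /eqP E; have := iterp_none E Hk; by rewrite Hr.
have : iterp par (dep hb v).+1 v = None by rewrite -add1n iterpD /= Hr /= /iterp /= Pr.
by move/iterp_none/(_ Hk) ->.
Qed.

Lemma dep_anc n (par : 'I_n -> option 'I_n) (hb : is_branching par) v k u :
  iterp par k v = Some u -> dep hb u = dep hb v - k /\ k <= dep hb v.
Proof.
move=> Hu.
have Hk : k <= dep hb v by rewrite -(iterp_some hb) Hu.
split=> //; apply: dep_eq.
have [r [Hr Pr]] := dep_level hb v.
exists r; split=> //; by rewrite -Hr -{2}(subnK Hk) iterpD Hu.
Qed.


Lemma anc_sum n (par : 'I_n -> option 'I_n) (hb : is_branching par) (M : 'M['F_2]_n)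
  (HM : forall i j : 'I_n, M j i = 1%R <-> reach par i j) v (F : 'I_n -> 'F_2) :
  (\sum_u M v u * F u = \sum_(k < (dep hb v).+1) F (odflt v (iterp par k v)))%R.
Proof.
set f := fun k : 'I_(dep hb v).+1 => odflt v (iterp par k v).
have Hf : forall k : 'I_(dep hb v).+1, iterp par k v = Some (f k).
  move=> k; rewrite /f; have := iterp_some hb v k; rewrite -ltnS ltn_ord.
  by case: (iterp par k v).
have finj : injective f.
  move=> a b Hab; apply/val_inj.
  have [Ha Hal] := dep_anc hb (Hf a); have [Hb Hbl] := dep_anc hb (Hf b).
  move: Ha; rewrite Hab Hb => /eqP; rewrite eqn_sub2lE //.
    by move/eqP.
rewrite (eq_bigr (fun u => if M v u == 1%R then F u else 0%R)); last first.
  move=> u _; case: (F2_cases (M v u)) => ->; rewrite ?mul0r ?mul1r //.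
rewrite -big_mkcond /=.
rewrite (eq_bigl (fun u => u \in f @: setT)); last first.
  move=> u /=; apply/idP/idP.
    move/eqP/HM => [k Hk]; apply/imsetP.
    have Hkl : k < (dep hb v).+1 by rewrite ltnS -(iterp_some hb) Hk.
    exists (Ordinal Hkl) => //; by move: (Hf (Ordinal Hkl)) => /=; rewrite Hk => -[].
  move=> /imsetP [k _ ->]; apply/eqP/HM; exists k; exact: Hf.
rewrite big_imset /=; last by move=> a b _ _; exact: finj.
by apply: eq_bigl => k; rewrite in_setT.
Qed.


Lemma natr_F2 m : (m%:R : 'F_2)%R = ((odd m)%:R)%R.
Proof.
elim: m => // m IH; rewrite -[m.+1]addn1 natrD IH oddD addbT /=.
by case: (odd m) => /=; rewrite ?add0r //; apply/val_inj.
Qed.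

Lemma F2_double (x : 'F_2) : (x + x = 0)%R.
Proof. by case: (F2_cases x) => ->; rewrite ?addr0 //; apply/val_inj. Qed.

Lemma count_mod d m : 0 < m -> \sum_(j < d) (j %% m == m.-1) = d %/ m.
Proof.
move=> Hm; elim: d => [|d IH]; first by rewrite big_ord0 div0n.
rewrite big_ord_recr /= IH divnS // addnC; congr (_ + _).
have E : d.+1 %% m = (d %% m).+1 %% m by rewrite -[d.+1]addn1 -modnDml addn1.
rewrite /dvdn E.
have := ltn_pmod d Hm.
case: eqP => [->|Hne] Hlt; first by rewrite prednK // modnn.
rewrite modn_small; last by clear E IH; lia.
by [].
Qed.

Lemma r_val n (par : 'I_n -> option 'I_n) (hb : is_branching par) (M : 'M['F_2]_n)
  (HM : forall i j : 'I_n, M j i = 1%R <-> reach par i j) (P : nat -> bool)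
  (q : 'cV['F_2]_n) (Hq : forall u, q u ord0 = ((P (dep hb u))%:R)%R) v :
  ((M *m q) v ord0 + q v ord0 = (\sum_(j < dep hb v) P j)%:R)%R.
Proof.
rewrite mxE (anc_sum hb HM v (fun u => q u ord0)) big_ord_recl.
rewrite [odflt v _]/= -addrA addrC -addrA F2_double addr0.
rewrite natr_sum -(big_mkord xpredT (fun j => (P j)%:R%R)) big_rev_mkord subn0.
apply: eq_bigr => i _.
have Hs : iterp par (lift ord0 i) v != None by rewrite (iterp_some hb) /= ltn_ord.
case E: (iterp par (lift ord0 i) v) Hs => [u|//] _ /=.
by rewrite Hq; have [-> _] := dep_anc hb E.
Qed.


Lemma mod_split d p : 0 < p -> d %% (p * 2) = d %% p + odd (d %/ p) * p.
Proof.
move=> Hp.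
have E : d = (d %/ p)./2 * (p * 2) + (odd (d %/ p) * p + d %% p).
  rewrite {1}(divn_eq d p) -{1}(odd_double_half (d %/ p)).
  move: (odd _) (_./2) (d %% p) => b a r; rewrite -muln2; nia.
rewrite {1}E modnMDl modn_small; first lia.
clear E; have := ltn_pmod d Hp; case: (odd _) => /= H; lia.
Qed.

Lemma mod_split_eq d p : 0 < p ->
  (d %% (p * 2) == (p * 2).-1) = (d %% p == p.-1) && odd (d %/ p).
Proof.
move=> Hp; rewrite mod_split //.
have := ltn_pmod d Hp; case: (odd _) => /=; lia.
Qed.


Lemma run_inv n (par : 'I_n -> option 'I_n) (hb : is_branching par) (M : 'M['F_2]_n)
  (HM : forall i j : 'I_n, M j i = 1%R <-> reach par i j) i :
  let st := run (fun q => (M *m q)%R) i in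
  st.2 = i /\ (forall v, st.1.1 v = (dep hb v %% 2 ^ i)%N) /\
  (forall v, st.1.2 v ord0 = ((dep hb v %% 2 ^ i == (2 ^ i).-1)%N : nat)%:R%R).
Proof.
elim: i => [|i IH] /=.
  split=> //; split=> v; first by rewrite ffunE modn1.
  by rewrite mxE modn1.
move: IH; case: (run _ i) => [[lvl q] cnt] /= [-> [Hl Hq]].
have Hp : 0 < 2 ^ i by rewrite expn_gt0.
have Hr : forall v, ((M *m q)%R + q)%R v ord0 = ((odd (dep hb v %/ 2 ^ i)) : nat)%:R%R.
  move=> v; rewrite mxE (@r_val _ _ hb _ HM (fun j => j %% 2 ^ i == (2 ^ i).-1)%N q) //.
  by rewrite count_mod // natr_F2.
split=> //; split=> v.
  rewrite ffunE Hr Hl expnS mulnC mod_split //.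
  by case: (odd _) => /=; rewrite ?mul1n ?mul0n ?addn0.
rewrite mxE Hr Hq expnS mulnC mod_split_eq //.
by case: (_ == _); case: (odd _); rewrite /= ?mulr0 ?mul0r ?mulr1.
Qed.


Lemma dep_lt n (par : 'I_n -> option 'I_n) (hb : is_branching par) v : dep hb v < n.
Proof.
set f := fun k : 'I_(dep hb v).+1 => odflt v (iterp par k v).
have Hf : forall k : 'I_(dep hb v).+1, iterp par k v = Some (f k).
  move=> k; rewrite /f; have := iterp_some hb v k; rewrite -ltnS ltn_ord.
  by case: (iterp par k v).
have finj : injective f.
  move=> a b Hab; apply/val_inj.
  have [Ha Hal] := dep_anc hb (Hf a); have [Hb Hbl] := dep_anc hb (Hf b).
  move: Ha; rewrite Hab Hb => /eqP; rewrite eqn_sub2lE //.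
    by move/eqP.
have := leq_card f finj; by rewrite !card_ord.
Qed.

Local Open Scope ring_scope.

Theorem lemma21 (n : nat) (par : 'I_n -> option 'I_n) (M : 'M['F_2]_n) :
  is_branching par ->
  (forall i j : 'I_n, M j i = 1 <-> reach par i j) ->
  let: (lvl, _, cnt) := run (fun q => M *m q) (up_log 2 n) in
  cnt = up_log 2 n /\ forall v : 'I_n, is_level par v (lvl v).
Proof.
move=> hb HM.
have := run_inv hb HM (up_log 2 n).
case: (run _ _) => [[lvl q] cnt] /= [-> [Hl _]]; split=> // v.
rewrite Hl modn_small; first exact: dep_level.
apply: leq_trans (dep_lt hb v) _; exact: up_logP.
Qed.
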